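(* There exist a positive integer $t$ and a constant $c>0$ such that for every integer $n\geq 3$ (logarithms natural), $$R_t(3,n)\geq c\, n\frac{\log n}{\log\log n}.$$
   Context: A function $f:\mathbb{R}^{m}\to\mathbb{R}$ is linear if $f(\mathbf{x})=b+\sum_{i=1}^m a_i\mathbf{x}(i)$ for some reals $a_1,\dots,a_m,b$. A (finite, simple) graph $G$ is semilinear of complexity $t$ if $V(G)\subset\mathbb{R}^d$ for some positive integer $d$, and there are $t$ linear functions $f_1,\dots,f_t:\mathbb{R}^d\times\mathbb{R}^d\to\mathbb{R}$ and a Boolean function $\phi:\{\mathrm{F},\mathrm{T}\}^{3t}\to\{\mathrm{F},\mathrm{T}\}$ such that for distinct $\mathbf{x},\mathbf{y}\in V(G)$, $\{\mathbf{x},\mathbf{y}\}$ is an edge iff $\phi\big(\{f_i(\mathbf{x},\mathbf{y})<0,\ f_i(\mathbf{x},\mathbf{y})\leq 0,\ f_i(\mathbf{x},\mathbf{y})=0\}_{i\in[t]}\big)=\mathrm{T}$; it is assumed that this truth value is unchanged when $\mathbf{x}$ and $\mathbf{y}$ are swapped. $R_t(s,n)$ denotes the smallest $N$ such that every semilinear graph of complexity $t$ on $N$ vertices contains a clique of size $s$ or an independent set of size $n$. *)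

(* Defs.v *)
From HB Require Import structures.
From Stdlib Require Import Reals.
From mathcomp Require Import all_boot all_order all_algebra.
From mathcomp Require Import Rstruct.

Set Implicit Arguments.
Unset Strict Implicit.
Unset Printing Implicit Defensive.

Import Order.TTheory GRing.Theory Num.Theory.
Local Open Scope ring_scope.

(* A linear function f : R^d x R^d -> R, f(x,y) = b + sum_i a_i x(i) + sum_i a'_i y(i),
   represented by its coefficients (a, a', b). *)
Definition lincoef (d : nat) : Type := ('rV[R]_d * 'rV[R]_d * R)%type.

Definition lin_eval (d : nat) (f : lincoef d) (x y : 'rV[R]_d) : R :=
  f.2 + \sum_(k < d) f.1.1 0 k * x 0 k + \sum_(k < d) f.1.2 0 k * y 0 k.

(* The Boolean function phi : {F,T}^{3t} -> {F,T}, its 3t inputs grouped as three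
   t-tuples: the values of [f_i < 0], [f_i <= 0], [f_i = 0] for i in [t]. *)
Definition boolfun (t : nat) : Type :=
  {ffun 'I_t -> bool} -> {ffun 'I_t -> bool} -> {ffun 'I_t -> bool} -> bool.

Definition semilin_adj (d t : nat) (F : 'I_t -> lincoef d) (phi : boolfun t)
  (x y : 'rV[R]_d) : bool :=
  phi [ffun i => lin_eval (F i) x y < 0]
      [ffun i => lin_eval (F i) x y <= 0]
      [ffun i => lin_eval (F i) x y == 0].

Definition ramsey_prop (t s n N : nat) : Prop :=
  forall (d : nat) (pts : 'I_N -> 'rV[R]_d) (F : 'I_t -> lincoef d) (phi : boolfun t),
    (0 < d)%N ->
    injective pts ->
    (forall i j : 'I_N, i != j ->
        semilin_adj F phi (pts i) (pts j) = semilin_adj F phi (pts j) (pts i)) ->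
    (exists S : {set 'I_N}, #|S| = s /\
        forall i j, i \in S -> j \in S -> i != j -> semilin_adj F phi (pts i) (pts j))
    \/
    (exists S : {set 'I_N}, #|S| = n /\
        forall i j, i \in S -> j \in S -> i != j -> ~~ semilin_adj F phi (pts i) (pts j)).

(* R_t(s,n) is the smallest N with [ramsey_prop t s n N].  "R_t(s,n) >= x" for a
   real x means that no natural number N < x has this property. *)
Definition Rt_ge (t s n : nat) (x : R) : Prop :=
  forall N : nat, (INR N < x)%R -> ~ ramsey_prop t s n N.

(* Main.v *)
Require Import Defs.
From Stdlib Require Import Reals.

Module Dev.
From HB Require Import structures.
From Stdlib Require Import Reals Lra.
From mathcomp Require Import all_boot all_order all_algebra.
From mathcomp Require Import Rstruct.
From mathcomp Require Import zify.
Set Implicit Arguments.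
Unset Strict Implicit.
Unset Printing Implicit Defensive.
Import Order.TTheory GRing.Theory Num.Theory.
Lemma divn_eqE d m q : 0 < d -> (m %/ d == q) = (q * d <= m) && (m < q.+1 * d).
Proof.
move=> d0; rewrite -leq_divRL // -ltn_divLR // ltnS.
by rewrite eqn_leq andbC.
Qed.

Definition ins (a e : nat) := a %/ 2^e * 2^e.+1 + a %% 2^e.

Lemma insE a e : ins a e = (a %/ 2^e).*2 * 2^e + a %% 2^e.
Proof. by rewrite /ins expnS mulnA muln2. Qed.

Lemma ins_div a e : ins a e %/ 2^e = (a %/ 2^e).*2.
Proof.
rewrite insE divnMDl ?expn_gt0 //.
by rewrite (divn_small (ltn_pmod _ _)) ?expn_gt0 // addn0.
Qed.

Lemma ins_mod a e : ins a e %% 2^e = a %% 2^e.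
Proof.
by rewrite insE modnMDl modn_mod.
Qed.

Lemma ins_inj e : injective (ins^~ e).
Proof.
move=> a b /= h.
rewrite (divn_eq a (2^e)) (divn_eq b (2^e)) -ins_mod h ins_mod.
have := congr1 (fun x => x %/ 2^e) h; rewrite /= !ins_div => /eqP.
by rewrite -!muln2 eqn_pmul2r // => /eqP ->.
Qed.

Lemma ins_lt M e a : a < M * 2^e -> ins a e < M * 2^e.+1.
Proof.
move=> ha; rewrite /ins.
have hq : a %/ 2^e < M by rewrite ltn_divLR ?expn_gt0.
have hr : a %% 2^e < 2^e by rewrite ltn_pmod ?expn_gt0.
rewrite expnS.
set X := 2^e in hr *; set q := a %/ X in hq *; set r := a %% X in hr *.
nia.
Qed.

Lemma ins_even a e : ~~ odd (ins a e %/ 2^e).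
Proof. by rewrite ins_div odd_double. Qed.

Section Graph.
Variables (M k' : nat).
Definition V := ('I_(M * 2^k') * 'I_k'.+1)%type.
Definition leaf (x : V) := ins x.1 x.2.
Definition lev (x : V) : nat := x.2.
Definition arc (x y : V) := (lev x <= lev y) && (leaf y %/ 2^(lev x) == (leaf x %/ 2^(lev x)).+1).
Definition adj (x y : V) := arc x y || arc y x.

Lemma arc_lt x y : arc x y -> leaf x < leaf y.
Proof.
case/andP=> _ /eqP h; rewrite ltnNge; apply/negP=> hle.
have := leq_div2r (2^(lev x)) hle; rewrite h; by rewrite ltnn.
Qed.

Lemma arc_irr x : ~~ arc x x.
Proof. by apply/negP=> /arc_lt; rewrite ltnn. Qed.

Lemma no_trans u v w : arc u v -> arc v w -> arc u w -> False.
Proof.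
case/andP=> huv /eqP h1 /andP[hvw /eqP h2] /andP[_ /eqP h3].
have e : 2^(lev v) = 2^(lev u) * 2^(lev v - lev u) by rewrite -expnD subnKC.
have : leaf w %/ 2^(lev v) = leaf v %/ 2^(lev v).
  by rewrite e !divnMA h3 h1.
rewrite h2; lia.
Qed.

Lemma no_cyc u v w : arc u v -> arc v w -> arc w u -> False.
Proof. move=> /arc_lt h1 /arc_lt h2 /arc_lt h3; lia. Qed.

Lemma tri_free x y z : adj x y -> adj y z -> adj x z -> False.
Proof.
case/orP=> [h1|h1] /orP[h2|h2] /orP[h3|h3];
  first [exact: no_trans h1 h2 h3 | exact: no_trans h1 h3 h2 | exact: no_trans h2 h1 h3 | exact: no_trans h2 h3 h1 | exact: no_trans h3 h1 h2 | exact: no_trans h3 h2 h1 | exact: no_cyc h1 h2 h3 | exact: no_cyc h1 h3 h2 | exact: no_cyc h2 h1 h3 | exact: no_cyc h2 h3 h1 | exact: no_cyc h3 h1 h2 | exact: no_cyc h3 h2 h1].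
Qed.
End Graph.

Fixpoint good (act : nat -> nat -> bool) (a h r : nat) {struct h} : bool :=
  match h with
  | 0 => r == 0
  | h'.+1 => match r with
             | 0 => true
             | r'.+1 => if act h' (a %/ 2^h'.+1) then ~~ odd (a %/ 2^h') && good act a h' r'
                        else good act a h' r
             end
  end.

Lemma good_mono act a h r r' : r' <= r -> good act a h r -> good act a h r'.
Proof.
elim: h r r' => [|h IH] r r' /=.
  by move=> hr /eqP e; subst r; move: hr; rewrite leqn0.
case: r' => // r'; case: r => // r; rewrite ltnS => hr.
case: (act _ _) => /=.
  by case/andP=> -> /= /IH; apply.
by move/IH; apply.
Qed.

Lemma split_sum h (F : nat -> nat) :
  \sum_(0 <= b < 2^h.+1) F b = \sum_(0 <= b < 2^h) F b + \sum_(0 <= b < 2^h) F (2^h + b).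
Proof.
rewrite (@big_cat_nat _ _ _ (2^h)) //=; last by rewrite expnS mul2n -addnn leq_addr.
congr (_ + _).
rewrite -{1}[2^h]add0n big_addn expnS mul2n -addnn addnK.
by apply: eq_bigr => i _; rewrite addnC.
Qed.

Lemma good_count act h : forall q r,
  (\sum_(0 <= b < 2^h) good act (q * 2^h + b) h r) * 2^r <= 2^h.
Proof.
elim: h => [|h IH] q r.
  rewrite expn0 big_nat1 /=; case: r => //= r.
case: r => [|r].
  rewrite expn0 muln1 /=.
  by rewrite (eq_bigr (fun _ => 1)) // sum_nat_const_nat subn0 muln1.
rewrite split_sum.
have e1 : forall b, b < 2^h -> q * 2^h.+1 + b = (q.*2) * 2^h + b.
  by move=> b _; rewrite expnS mulnA muln2.
have e2 : forall b, b < 2^h -> q * 2^h.+1 + (2^h + b) = (q.*2.+1) * 2^h + b.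
  by move=> b _; rewrite addnA expnS mulnA muln2 mulSn (addnC (2^h)).
have d1 : forall b, b < 2^h -> (q * 2^h.+1 + b) %/ 2^h.+1 = q.
  move=> b hb; rewrite divnMDl ?expn_gt0 // divn_small ?addn0 //.
  by apply: (leq_trans hb); rewrite leq_exp2l.
have d2 : forall b, b < 2^h -> (q * 2^h.+1 + (2^h + b)) %/ 2^h.+1 = q.
  move=> b hb; rewrite divnMDl ?expn_gt0 // divn_small ?addn0 //.
  by rewrite expnS mul2n -addnn ltn_add2l.
have o1 : forall b, b < 2^h -> (q * 2^h.+1 + b) %/ 2^h = q.*2.
  by move=> b hb; rewrite e1 // divnMDl ?expn_gt0 // divn_small ?addn0.
have o2 : forall b, b < 2^h -> (q * 2^h.+1 + (2^h + b)) %/ 2^h = q.*2.+1.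
  by move=> b hb; rewrite e2 // divnMDl ?expn_gt0 // divn_small ?addn0.
rewrite (@eq_big_nat _ _ _ 0 (2^h) _ (fun b => nat_of_bool (if act h q then good act (q.*2 * 2^h + b) h r
                               else good act (q.*2 * 2^h + b) h r.+1))); last first.
  move=> b /andP[_ hb] /=; rewrite d1 // o1 // odd_double e1 //.
rewrite [X in _ + X](@eq_big_nat _ _ _ 0 (2^h) _ (fun b => nat_of_bool (if act h q then false
                               else good act (q.*2.+1 * 2^h + b) h r.+1))); last first.
  move=> b /andP[_ hb] /=; rewrite d2 // o2 //= odd_double /= e2 //.
case: (act h q).
  rewrite [X in _ + X]big1 // addn0 expnS mulnA.
  have := IH q.*2 r; set s := \sum_(_ <= _ < _) _; rewrite expnS; nia.
have := IH q.*2 r.+1; have := IH q.*2.+1 r.+1.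
set s1 := \sum_(_ <= _ < _) _; set s2 := \sum_(_ <= _ < _) _.
rewrite !expnS; nia.
Qed.

Lemma good_block act h r Q :
  (\sum_(0 <= a < Q * 2^h) good act a h r) * 2^r <= Q * 2^h.
Proof.
elim: Q => [|Q IH]; first by rewrite mul0n big_geq.
rewrite mulSnr (@big_cat_nat _ _ _ (Q * 2^h)) //= ?leq_addr //.
rewrite -{2}[Q * 2^h]add0n big_addn addKn.
rewrite [X in _ + X](eq_bigr (fun b => (good act (Q * 2^h + b) h r : nat))); last first.
  by move=> i _; rewrite addnC.
rewrite mulnDl; apply: leq_add => //; exact: good_count.
Qed.

Lemma V_eq M k' (x y : V M k') : leaf x = leaf y -> lev x = lev y -> x = y.
Proof.
case: x => [x1 x2]; case: y => [y1 y2]; rewrite /leaf /lev /= => hl hv.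
have e2 : x2 = y2 by apply: val_inj.
subst y2; congr pair; apply: val_inj; exact: (ins_inj hl).
Qed.

Lemma leaf_lt M k' (x : V M k') : leaf x < M * 2^k'.+1.
Proof.
rewrite /leaf; case: x => [[a ha] [e he]] /=.
have h1 : 2^k' = 2^(k' - e) * 2^e by rewrite -expnD subnK.
have h2 : 2^k'.+1 = 2^(k' - e) * 2^e.+1 by rewrite -expnD addnS subnK.
rewrite h2 mulnA; apply: ins_lt; by rewrite -mulnA -h1.
Qed.

Lemma lev_lt M k' (x : V M k') : lev x < k'.+1.
Proof. by rewrite /lev. Qed.

Lemma card_sum (T : finType) (I : {set T}) (P : pred T) :
  #|[set x in I | P x]| = \sum_(x in I) P x.
Proof.
rewrite -sum1_card [RHS](eq_bigr (fun x => if P x then 1 else 0)); last first.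
  by move=> x _; case: (P x).
rewrite -big_mkcondr; apply: eq_bigl => x; by rewrite !inE.
Qed.

Section Alpha.
Variables (M k' : nat) (I : {set V M k'}).
Hypothesis indep : forall x y, x \in I -> y \in I -> ~~ arc x y.
Local Notation k := k'.+1.
Local Notation A := (M * 2^k'.+1).

Definition act h q := [exists x in I, (lev x == h) && (leaf x %/ 2^h.+1 == q)].
Definition cnt a h := #|[set x in I | (leaf x == a) && (lev x < h)]|.

Lemma cnt_step a h : cnt a h.+1 <= cnt a h + act h (a %/ 2^h.+1).
Proof.
rewrite /cnt.
set S1 := [set x in I | _]; set S0 := [set x in I | _].
set S2 := [set x in I | (leaf x == a) && (lev x == h)].
have sub : S1 \subset S0 :|: S2.
  apply/subsetP=> x; rewrite !inE; case/andP=> -> /andP[-> /=].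
  by rewrite ltnS leq_eqVlt orbC.
apply: (leq_trans (subset_leq_card sub)); apply: (leq_trans (leq_card_setU _ _)).
rewrite leq_add2l.
case E: (act _ _).
  apply/card_le1_eqP=> x z; rewrite !inE => /andP[_ /andP[/eqP hx /eqP hx']] /andP[_ /andP[/eqP hz /eqP hz']].
  by apply: V_eq; rewrite ?hx ?hz ?hx' ?hz'.
rewrite leqn0 cards_eq0; apply/eqP/setP=> x; rewrite !inE.
apply/negP=> /andP[xI /andP[/eqP hx /eqP hx']].
have : act h (a %/ 2^h.+1).
  by apply/existsP; exists x; rewrite xI hx hx' !eqxx.
by rewrite E.
Qed.

Lemma odd_step X Y : ~~ odd X -> odd Y -> X./2 = Y./2 -> Y = X.+1.
Proof.
move=> hX hY h.
have eX := odd_double_half X; have eY := odd_double_half Y.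
rewrite (negbTE hX) hY /= in eX eY; rewrite h in eX; lia.
Qed.

Lemma div2S m h : m %/ 2^h.+1 = (m %/ 2^h)./2.
Proof. by rewrite expnS mulnC divnMA divn2. Qed.

Lemma inv a h : (exists y, [/\ y \in I, leaf y = a & h <= (lev y).+1]) ->
  good act a h (cnt a h).
Proof.
elim: h => [|h IH] hy.
  suff -> : cnt a 0 = 0 by [].
  rewrite /cnt; apply/eqP; rewrite cards_eq0; apply/eqP/setP=> x; rewrite !inE.
  by rewrite ltn0 !andbF.
have [y [yI ya hyh]] := hy.
have IH' := IH (ex_intro _ y (And3 yI ya (leqW hyh))).
apply: (good_mono (cnt_step a h)).
case E: (act h (a %/ 2^h.+1)).
  rewrite addn1 /= E IH' andbT.
  apply/negP=> hodd.
  case/existsP: E => x /andP[xI /andP[/eqP hx /eqP hq]].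
  have ev := ins_even x.1 x.2.
  have hxy : arc x y.
    rewrite /arc hx -ltnS hyh /=; rewrite ya; apply/eqP.
    apply: odd_step => //; first by rewrite -hx.
    by rewrite -!div2S hq.
  by move: (indep xI yI); rewrite hxy.
rewrite addn0.
move: IH'; case: (cnt a h) => [|c] //= ->.
by rewrite E.
Qed.

Definition Ia a := [set x in I | leaf x == a].

Lemma Ia_card a : #|Ia a| <= k.
Proof.
rewrite -(card_in_imset (f := fun x : V M k' => x.2)); first by apply: leq_trans (max_card _) _; rewrite card_ord.
move=> x z; rewrite !inE => /andP[_ /eqP hx] /andP[_ /eqP hz] e.
by apply: V_eq; rewrite ?hx ?hz // /lev e.
Qed.

Lemma per_leaf a R : 0 < R ->
  #|Ia a| <= R.-1 + k * \sum_(h < k) good act a h.+1 R.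
Proof.
move=> R0.
case: (ltnP #|Ia a| R) => hR.
  by apply: leq_trans (leq_addr _ _); rewrite -ltnS prednK.
have ne : 0 < #|Ia a| by apply: leq_trans hR.
have [y yI ey] := eq_bigmax_cond (fun x : V M k' => (lev x).+1) ne.
set m1 := \max_(x in Ia a) (lev x).+1 in ey.
have hc : cnt a m1 = #|Ia a|.
  rewrite /cnt /Ia; apply: eq_card => x; rewrite !inE.
  case xI: (x \in I); case xa: (leaf x == a) => //=.
  by apply: (leq_bigmax_cond (F := fun x => (lev x).+1)); rewrite inE xI xa.
have yI' := yI; rewrite inE in yI'; case/andP: yI' => yI'' /eqP ya.
rewrite ey in hc.
have g := @inv a (lev y).+1 (ex_intro _ y (And3 yI'' ya (leqnn _))).
rewrite hc in g.
have g' := good_mono hR g.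
apply: (leq_trans (Ia_card a)); apply: leq_trans (leq_addl _ _).
rewrite -[X in X <= _]muln1 leq_mul2l; apply/orP; right.
by rewrite (bigD1 y.2) //= /lev in g' *; rewrite g'.
Qed.

Lemma card_I : #|I| = \sum_(a < A) #|Ia a|.
Proof.
rewrite (eq_bigr (fun a : 'I_A => \sum_(x in I) (leaf x == a))); last first.
  by move=> a _; rewrite /Ia card_sum.
rewrite exchange_big /= -sum1_card; apply: eq_bigr => x xI.
rewrite (bigD1 (Ordinal (leaf_lt x))) //= eqxx big1 // => a ha.
case E: (leaf x == a) => //.
by move: ha; rewrite -(inj_eq val_inj) /= (eqP E) eqxx.
Qed.

Lemma sum_good h R : h < k -> (\sum_(a < A) good act a h.+1 R) * 2^R <= A.
Proof.
move=> hk.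
have eA : A = (M * 2^(k' - h)) * 2^h.+1 by rewrite -mulnA -expnD addnS subnK.
rewrite -(big_mkord xpredT (fun a => nat_of_bool (good act a h.+1 R))).
rewrite [X in _ <= X]eA {1}eA; exact: good_block.
Qed.

Lemma alpha_bound R : 0 < R -> k * k <= 2^R -> #|I| <= R * A.
Proof.
move=> R0 hk.
rewrite card_I.
apply: (@leq_trans (\sum_(a < A) (R.-1 + k * \sum_(h < k) good act a h.+1 R))).
  by apply: leq_sum => a _; exact: per_leaf.
rewrite big_split /= sum_nat_const card_ord -big_distrr /= exchange_big /=.
set S := \sum_(j < k) _.
have hS : S * 2^R <= k * A.
  rewrite /S big_distrl /=.
  apply: (@leq_trans (\sum_(j < k) A)); last by rewrite sum_nat_const card_ord.
  by apply: leq_sum => j _; apply: sum_good.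
have : k * S <= A.
  rewrite -(@leq_pmul2r (2^R)) ?expn_gt0 // -mulnA.
  apply: (leq_trans (leq_mul (leqnn k) hS)).
  by rewrite mulnA mulnC leq_mul2l hk orbT.
rewrite -[R in R * A]prednK //; set r := R.-1; set s := k * S; nia.
Qed.
End Alpha.

Section Generic.
Local Open Scope ring_scope.
Lemma no_ramsey t (T : finType) d (P : T -> 'rV[R]_d) (F : 'I_t -> lincoef d)
  (phi : boolfun t) (adjT : T -> T -> bool) n N :
  (0 < d)%N -> injective P ->
  (forall x y, semilin_adj F phi (P x) (P y) = adjT x y) ->
  (forall x y, adjT x y = adjT y x) ->
  (forall x y z, adjT x y -> adjT y z -> adjT x z -> False) ->
  (forall S : {set T}, (forall x y, x \in S -> y \in S -> x != y -> ~~ adjT x y) -> (#|S| < n)%N) ->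
  (N <= #|T|)%N -> ~ ramsey_prop t 3 n N.
Proof.
move=> d0 Pinj hadj hsym htri hind hN H.
pose emb (i : 'I_N) : T := enum_val (widen_ord hN i).
have embI : injective emb.
  by move=> i j /enum_val_inj /(congr1 val) /= /val_inj.
have hinj : injective (fun i => P (emb i)) by move=> i j /Pinj /embI.
have hsy : forall i j : 'I_N, i != j -> semilin_adj F phi (P (emb i)) (P (emb j)) =
    semilin_adj F phi (P (emb j)) (P (emb i)).
  by move=> i j _; rewrite !hadj hsym.
case: (H d _ F phi d0 hinj hsy).
- case=> S [cS hS].
  have : (2 < #|S|)%N by rewrite cS.
  case/card_gt2P=> x [y [z [[xS yS zS] [xy yz zx]]]].
  apply: (htri (emb x) (emb y) (emb z)).
  + by rewrite -hadj; apply: hS.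
  + by rewrite -hadj; apply: hS.
  + by rewrite -hadj; apply: hS => //; rewrite eq_sym.
- case=> S [cS hS].
  suff: (n < n)%N by rewrite ltnn.
  rewrite -[X in (X < _)%N]cS -(card_imset S embI); apply: hind.
  move=> u v /imsetP[x xS ->] /imsetP[y yS ->] uv.
  rewrite -hadj; apply: hS => //.
  by apply: contraNneq uv => ->.
Qed.
End Generic.

Section Encode.
Local Open Scope ring_scope.

Definition mkF d (a b : 'I_d) (s : bool) : lincoef d :=
  if s then (\row_j (- ((j == b)%:R)), \row_j ((j == a)%:R), 0)
  else (\row_j ((j == a)%:R), \row_j (- ((j == b)%:R)), 0).

Lemma sum_delta d (m : 'I_d) (v : 'I_d -> R) :
  \sum_(j < d) (j == m)%:R * v j = v m.
Proof.
rewrite (bigD1 m) //= eqxx mul1r big1 ?addr0 // => j /negbTE ->.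
by rewrite mul0r.
Qed.

Lemma lin_eval_mkF d (a b : 'I_d) s (x y : 'rV[R]_d) :
  lin_eval (mkF a b s) x y = if s then y 0 a - x 0 b else x 0 a - y 0 b.
Proof.
have hp : forall (m : 'I_d) (v : 'rV[R]_d),
    \sum_(k < d) (\row_j ((j == m)%:R)) 0 k * v 0 k = v 0 m.
  by move=> m v; rewrite -(sum_delta m (fun k => v 0 k)); apply: eq_bigr => j _; rewrite mxE.
have hn : forall (m : 'I_d) (v : 'rV[R]_d),
    \sum_(k < d) (\row_j (- ((j == m)%:R))) 0 k * v 0 k = - v 0 m.
  move=> m v; rewrite -(sum_delta m (fun k => v 0 k)) -sumrN.
  by apply: eq_bigr => j _; rewrite mxE mulNr.
rewrite /lin_eval /mkF; case: s; cbn [fst snd]; rewrite !RplusE hp hn add0r //.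
by rewrite addrC.
Qed.
End Encode.

Section Concrete.
Local Open Scope ring_scope.
Variables (M k' : nat).

Definition Lc (x : V M k') := ((leaf x %/ 2^lev x).+1 * 2^lev x)%N.
Definition Rc (x : V M k') := ((leaf x %/ 2^lev x).+2 * 2^lev x)%N.
Definition coord (x : V M k') (i : 'I_4) : nat := nth 0%N [:: leaf x; Lc x; Rc x; lev x] i.
Definition Pt (x : V M k') : 'rV[R]_4 := \row_i (coord x i)%:R.

Definition o0 : 'I_4 := @Ordinal 4 0 isT.
Definition o1 : 'I_4 := @Ordinal 4 1 isT.
Definition o2 : 'I_4 := @Ordinal 4 2 isT.
Definition o3 : 'I_4 := @Ordinal 4 3 isT.

Definition F6 (i : 'I_6) : lincoef 4 :=
  match val i with
  | 0 => mkF o0 o1 true | 1 => mkF o0 o2 true | 2 => mkF o3 o3 true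
  | 3 => mkF o0 o1 false | 4 => mkF o0 o2 false | _ => mkF o3 o3 false
  end.

Definition phi6 : boolfun 6 := fun lt le eq =>
  (~~ lt (@Ordinal 6 0 isT) && lt (@Ordinal 6 1 isT) && ~~ lt (@Ordinal 6 2 isT)) ||
  (~~ lt (@Ordinal 6 3 isT) && lt (@Ordinal 6 4 isT) && ~~ lt (@Ordinal 6 5 isT)).

Lemma nlt0 (a b : nat) : ~~ ((a%:R : R) - b%:R < 0) = (b <= a)%N.
Proof. by rewrite subr_lt0 ltr_nat -leqNgt. Qed.

Lemma lt0 (a b : nat) : ((a%:R : R) - b%:R < 0) = (a < b)%N.
Proof. by rewrite subr_lt0 ltr_nat. Qed.

Lemma arcE x y : arc x y = [&& (lev x <= lev y)%N, (Lc x <= leaf y)%N & (leaf y < Rc x)%N].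
Proof. by rewrite /arc divn_eqE ?expn_gt0. Qed.

Lemma linT (a b : 'I_4) (x y : 'rV[R]_4) :
  lin_eval (\row_j (- ((j == b)%:R)), \row_j ((j == a)%:R), 0) x y = y 0 a - x 0 b.
Proof. exact: (lin_eval_mkF a b true x y). Qed.
Lemma linF (a b : 'I_4) (x y : 'rV[R]_4) :
  lin_eval (\row_j ((j == a)%:R), \row_j (- ((j == b)%:R)), 0) x y = x 0 a - y 0 b.
Proof. exact: (lin_eval_mkF a b false x y). Qed.

Lemma semilinE x y : semilin_adj F6 phi6 (Pt x) (Pt y) = adj x y.
Proof.
rewrite /semilin_adj /phi6 !ffunE /F6 /= !linT !linF !mxE /= !nlt0 !lt0.
rewrite /coord /= /adj !arcE.
by case: (lev x <= lev y)%N; case: (lev y <= lev x)%N; rewrite ?andbT ?andbF.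

Qed.

Lemma Pt_inj : injective Pt.
Proof.
move=> x y h.
have h0 := congr1 (fun v : 'rV[R]_4 => v 0 o0) h.
have h3 := congr1 (fun v : 'rV[R]_4 => v 0 o3) h.
move: h0 h3; rewrite /= !mxE /coord /= => /eqP; rewrite eqr_nat => /eqP e0 /eqP.
rewrite eqr_nat => /eqP e3.
exact: V_eq.
Qed.

Lemma main_graph R0 n N : (0 < R0)%N -> (k'.+1 * k'.+1 <= 2^R0)%N ->
  (R0 * (M * 2^k'.+1) < n)%N -> (N <= M * 2^k' * k'.+1)%N -> ~ ramsey_prop 6 3 n N.
Proof.
move=> R0p hk hn hN.
apply: (@no_ramsey 6 (V M k') 4 Pt F6 phi6 (@adj M k') n N) => //.
- exact: Pt_inj.
- exact: semilinE.
- by move=> x y; rewrite /adj orbC.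
- exact: tri_free.
- move=> S hS.
  apply: leq_ltn_trans hn.
  apply: alpha_bound => // x y xS yS.
  case: (eqVneq x y) => [->|xy]; first exact: arc_irr.
  by move: (hS x y xS yS xy); rewrite /adj negb_or => /andP[].
- by rewrite card_prod !card_ord.
Qed.
End Concrete.

Lemma pow_lem j : (3 <= j)%N -> (3 * j + 6 <= 2^j.+1)%N.
Proof.
elim: j => // j IH; rewrite leq_eqVlt => /orP[/eqP <- //|].
rewrite ltnS => /IH h; rewrite expnS; lia.
Qed.

Lemma nat_part n : (256 <= n)%N -> exists j k' M,
  [/\ (3 <= j)%N, (k'.+1 <= 2^j)%N, (2 * j * (M * 2^k'.+1) < n)%N,
      (n * 2^j <= 48 * j * (M * 2^k' * k'.+1))%N &
      (2^(2^j) <= n < 2^(2^j.+1))%N].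
Proof.
move=> hn.
have n0 : (0 < n)%N by apply: leq_trans hn.
set L := trunc_log 2 n; set j := trunc_log 2 L.
have /andP[hL1 hL2] : (2^L <= n < 2^L.+1)%N by exact: (trunc_log_bounds (p:=2) isT n0).
have hL8 : (8 <= L)%N by apply: trunc_log_max.
have L0 : (0 < L)%N by apply: leq_trans hL8.
have /andP[hj1 hj2] : (2^j <= L < 2^j.+1)%N by exact: (trunc_log_bounds (p:=2) isT L0).
have hj3 : (3 <= j)%N by apply: trunc_log_max.
have hjp : (3 * j + 6 <= 2 * 2^j)%N by rewrite -expnS; apply: pow_lem.
have jlt : (j < 2^j)%N by apply: ltn_expl.
set k := (2^j - j - 2)%N.
have ek : (k + j + 2 = 2^j)%N by rewrite /k; lia.
have k0 : (0 < k)%N by rewrite /k; lia.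
have k3 : (2^j <= 3 * k)%N by rewrite /k; lia.
set D := (2 * j * 2^k)%N.
have D0 : (0 < D)%N by rewrite /D !muln_gt0 expn_gt0 andbT; lia.
have hD : (D < n)%N.
  apply: (@leq_trans (2^(2^j))); last first.
    by apply: leq_trans hL1; rewrite leq_exp2l.
  rewrite -ek addnC expnD /D.
  rewrite addnC expnD expnS; lia.
set M := ((n.-1) %/ D)%N.
have M1 : (0 < M)%N by rewrite divn_gt0 //; lia.
have hM : (n <= M.+1 * D)%N by have := ltn_ceil n.-1 D0; lia.
have hM2 : (M * D <= n.-1)%N by apply: leq_divM.
exists j, k.-1, M; rewrite prednK //; split => //.
- lia.
- have -> : (2 * j * (M * 2^k) = M * D)%N by rewrite /D; lia.
  lia.
- have eP : (2^k = 2 * 2^k.-1)%N by rewrite -expnS prednK.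
  have h1 : (n * 2^j <= 2 * M * D * 2^j)%N.
    rewrite leq_mul2r; apply/orP; right.
    have : (D <= M * D)%N by rewrite leq_pmull.
    lia.
  have h2 : (2 * M * D * 2^j <= 2 * M * D * (3 * k))%N by rewrite leq_mul2l k3 orbT.
  have := leq_trans h1 h2; rewrite /D eP.
  set P := 2^k.-1; set Q := 2^j; lia.
- apply/andP; split; first by apply: leq_trans hL1; rewrite leq_exp2l.
  by apply: (leq_trans hL2); rewrite leq_exp2l.
Qed.
Section Num.
Local Open Scope R_scope.

Lemma pow_num : (32/31)^33 <= 3.
Proof. simpl. lra. Qed.

Lemma ln_le_sub1 y : 0 < y -> ln y <= y - 1.
Proof. move=> hy; have := exp_ineq1_le (ln y); rewrite exp_ln //; lra. Qed.

Lemma ln_ge y : 0 < y -> 1 - / y <= ln y.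
Proof.
move=> hy; have := ln_le_sub1 (Rinv_0_lt_compat _ hy).
rewrite ln_Rinv //; lra.
Qed.

Lemma ln_mono x y : 0 < x -> x <= y -> ln x <= ln y.
Proof.
move=> hx [h|<-]; last by lra.
by apply: Rlt_le; apply: ln_increasing.
Qed.

Lemma ln3 : 33/32 <= ln 3.
Proof.
have h1 : 1/32 <= ln (32/31).
  have := @ln_ge (32/31) ltac:(lra).
  have -> : / (32/31) = 31/32 by field.
  lra.
have h2 := @ln_mono ((32/31)^33) 3 (pow_lt (32/31) 33 ltac:(lra)) pow_num.
rewrite ln_pow in h2; last by lra.
have : INR 33 = 33 by simpl; lra.
move=> e; rewrite e in h2. lra.
Qed.
End Num.

Section RealPart.
Local Open Scope R_scope.

Lemma INR_muln a b : INR (a * b)%N = INR a * INR b.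
Proof. exact: mult_INR. Qed.

Lemma INR_exp2 m : INR (2 ^ m)%N = 2 ^ m.
Proof.
elim: m => [|m IH] //; rewrite expnS INR_muln IH /=; lra.
Qed.

Lemma lnpow2 m : ln (2 ^ m) = INR m * ln 2.
Proof. by rewrite ln_pow //; lra. Qed.

Lemma real_part (n N j V : nat) : (3 <= j)%N -> (2^(2^j) <= n)%N -> (n < 2^(2^j.+1))%N ->
  (n * 2^j <= 48 * j * V)%N ->
  INR N < 1/10000 * INR n * ln (INR n) / ln (ln (INR n)) -> (N < V)%N.
Proof.
move=> hj h1 h2 h3 hN.
set x := INR n in hN *.
set P := INR (2^j)%N.
set J := INR j.
have J3 : 3 <= J.
  have := le_INR 3 j (elimT ssrnat.leP hj); rewrite /J /=; lra.
have P0 : 0 < P by rewrite /P INR_exp2; apply: pow_lt; lra.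
have l2 := ln_lt_2.
have hx1 : 2 ^ (2^j) <= x by rewrite /x -INR_exp2; apply: le_INR; apply/ssrnat.leP.
have hx2 : x < 2 ^ (2^j.+1) by rewrite /x -INR_exp2; apply: lt_INR; apply/ssrnat.ltP.
have x0 : 0 < x by apply: Rlt_le_trans hx1; apply: pow_lt; lra.
have lx1 : P * ln 2 <= ln x.
  rewrite /P -lnpow2; apply: ln_mono => //; apply: pow_lt; lra.
have lx2 : ln x < 2 * P * ln 2.
  have -> : 2 * P = INR (2^j.+1)%N by rewrite /P expnS INR_muln.
  rewrite -lnpow2; apply: ln_increasing => //.
have eP : P / 2 = 2 ^ (j.-1).
  rewrite /P INR_exp2 -{1}(prednK (leq_trans (isT : (0 < 3)%N) hj)) /=; field.
have llx : (J - 1) * ln 2 <= ln (ln x).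
  have -> : J - 1 = INR j.-1.
    by rewrite /J -{1}(prednK (leq_trans (isT : (0 < 3)%N) hj)) S_INR; lra.
  rewrite -lnpow2 -eP; apply: ln_mono; first lra.
  nra.
have llx0 : 0 < ln (ln x) by nra.
have hV : x * P <= 48 * J * INR V.
  have := le_INR _ _ (elimT ssrnat.leP h3); rewrite !INR_muln /x /P /J.
  by have -> : INR 48 = 48 by simpl; lra.
set X := 1/10000 * x * ln x / ln (ln x) in hN *.
have eX : X * ln (ln x) = 1/10000 * x * ln x by rewrite /X; field; lra.
have key : X * (48 * J) * ln (ln x) <= x * P * ln (ln x).
  rewrite (Rmult_comm X) Rmult_assoc eX.
  have s1 : 48 * J * (1/10000 * x * ln x) <= 48 * J * (1/10000 * x * (2 * P * ln 2)).
    apply: Rmult_le_compat_l; first lra.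
    apply: Rmult_le_compat_l; first nra.
    lra.
  have s2 : 48 * J * (1/10000 * x * (2 * P * ln 2)) <= (J - 1) * ln 2 * (x * P).
    have e : 48 * J * (1/10000 * x * (2 * P * ln 2)) = (96/10000 * J) * ln 2 * (x * P) by field.
    rewrite e; apply: Rmult_le_compat_r; first nra.
    apply: Rmult_le_compat_r; lra.
  have s3 : (J - 1) * ln 2 * (x * P) <= ln (ln x) * (x * P).
    apply: Rmult_le_compat_r => //; nra.
  lra.
have hX : X * (48 * J) <= x * P.
  apply: (Rmult_le_reg_r (ln (ln x))) => //.
have : INR N < INR V.
  apply: (Rlt_le_trans _ X) => //.
  apply: (Rmult_le_reg_r (48 * J)); first lra.
  lra.
by move/INR_lt/ssrnat.ltP.
Qed.
End RealPart.

Section Empty.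
Local Open Scope ring_scope.
Lemma empty_case n N : (N < n)%N -> ~ ramsey_prop 6 3 n N.
Proof.
move=> hN.
pose P (i : 'I_N) : 'rV[R]_1 := \row_(j < 1) (i : nat)%:R.
apply: (@no_ramsey 6 'I_N 1 P (fun _ => (0, 0, 0%R)) (fun _ _ _ => false) (fun _ _ => false) n N) => //.
- move=> i j h.
  have := congr1 (fun v : 'rV[R]_1 => v 0 0) h; rewrite /P !mxE => /eqP.
  by rewrite eqr_nat => /eqP /val_inj.
- move=> S _; apply: leq_ltn_trans hN.
  by apply: leq_trans (max_card _) _; rewrite card_ord.
- by rewrite card_ord.
Qed.
End Empty.

Section Small.
Local Open Scope R_scope.
Lemma small_case n N : (3 <= n)%N -> (n < 256)%N ->
  INR N < 1/10000 * INR n * ln (INR n) / ln (ln (INR n)) -> (N < n)%N.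
Proof.
move=> h3 h256 hN.
set x := INR n in hN *.
have x3 : 3 <= x.
  have := le_INR 3 n (elimT ssrnat.leP h3); rewrite /x /=; lra.
have x256 : x <= 256.
  have := le_INR n 256 (elimT ssrnat.leP (ltnW h256)); rewrite /x.
  have -> : INR 256 = 256 by rewrite INR_IZR_INZ.
  done.
have l3 := ln3.
have lx1 : ln 3 <= ln x by apply: ln_mono; lra.
have lx2 : ln x <= x - 1 by apply: ln_le_sub1; lra.
have llx : 1/33 <= ln (ln x).
  have h := @ln_ge (ln x) ltac:(lra).
  have : / ln x <= 32/33.
    rewrite -(Rinv_inv (32/33)); apply: Rinv_le_contravar; lra.
  lra.
set X := 1/10000 * x * ln x / ln (ln x) in hN *.
have eX : X * ln (ln x) = 1/10000 * x * ln x by rewrite /X; field; lra.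
have hX : X <= x.
  apply: (Rmult_le_reg_r (ln (ln x))); first lra.
  rewrite eX.
  have s1 : 1/10000 * x * ln x <= 1/10000 * x * x.
    apply: Rmult_le_compat_l; lra.
  have s2 : 1/10000 * x * x <= x * (1/33) by nra.
  have s3 : x * (1/33) <= x * ln (ln x) by apply: Rmult_le_compat_l; lra.
  lra.
have : INR N < INR n by rewrite -/x; lra.
by move/INR_lt/ssrnat.ltP.
Qed.
End Small.

Section Final.
Local Open Scope R_scope.
Lemma final : exists t : nat, (0 < t)%coq_nat /\
  exists c : R, 0 < c /\
  forall n : nat, (3 <= n)%coq_nat ->
    Rt_ge t 3 n (c * INR n * ln (INR n) / ln (ln (INR n))).
Proof.
exists 6%N; split; first by apply/ssrnat.ltP.
exists (1/10000); split; first lra.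
move=> n /ssrnat.leP h3 N /RltP hN.
case: (ltnP n 256) => hn.
  by apply: empty_case; exact: (small_case h3 hn hN).
have [j [k' [M [hj hk hR hV hb]]]] := nat_part hn.
case/andP: hb => hb1 hb2.
have hNV := real_part hj hb1 hb2 hV hN.
apply: (@main_graph M k' (2 * j) n N) => //.
- by rewrite muln_gt0; apply: leq_trans hj.
- by rewrite mul2n -addnn expnD; apply: leq_mul.
- exact: ltnW.
Qed.
End Final.
End Dev.

Theorem theorem1p2 :
  exists t : nat, (0 < t)%nat /\
  exists c : R, (0 < c)%R /\
  forall n : nat, (3 <= n)%nat ->
    Rt_ge t 3 n (c * INR n * ln (INR n) / ln (ln (INR n)))%R.
Proof. exact Dev.final. Qed.
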